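(* Let $\alpha_1,\dots,\alpha_4$ be constants, $H=H(t,t^-,q,q^-,p,p^-)$ smooth, and $X=\xi(t)\partial_t+\eta(t,q,p)\partial_q+\nu(t,q,p)\partial_p$ with $\xi(t)=\alpha t+f(t)$, $\alpha$ constant and $f$ $\tau$-periodic. Then, with $\dot\xi=D(\xi)$, $$\Big(\xi\frac{\delta}{\delta t}+\eta\frac{\delta}{\delta q}+\nu\frac{\delta}{\delta p}\Big)\Omega\equiv X\Big(\xi\frac{\delta\tilde H}{\delta t}+\eta\frac{\delta\tilde H}{\delta q}+\nu\frac{\delta\tilde H}{\delta p}\Big)+\dot\xi\Big(\xi\frac{\delta\tilde H}{\delta t}+\eta\frac{\delta\tilde H}{\delta q}+\nu\frac{\delta\tilde H}{\delta p}\Big).$$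
   Context: Constant delay $\tau>0$; $t^\pm=t\pm\tau$, $f^\pm=f(t\pm\tau)$; scalar $q,p$. $S_\pm$: forward/backward shift operators on expressions; $\xi^\pm=S_\pm(\xi)$ etc.; $H^+=S_+(H)$. $D$: total derivative acting on variables at $t^-,t,t^+$. $\tilde H=p^{-}(\alpha_{1}\dot{q}+\alpha_{2}\dot{q}^{-})+p(\alpha_{3}\dot{q}+\alpha_{4}\dot{q}^{-})-H$. For $F$ a function of $(t,t^-,q,q^-,p,p^-,\dot q,\dot q^-,\dot p,\dot p^-)$: $\frac{\delta F}{\delta p}=\frac{\partial F}{\partial p}-D\frac{\partial F}{\partial\dot p}+S_+\Big(\frac{\partial F}{\partial p^-}-D\frac{\partial F}{\partial\dot p^-}\Big)$, $\frac{\delta F}{\delta q}=\frac{\partial F}{\partial q}-D\frac{\partial F}{\partial\dot q}+S_+\Big(\frac{\partial F}{\partial q^-}-D\frac{\partial F}{\partial\dot q^-}\Big)$, $\frac{\delta F}{\delta t}=\frac{\partial F}{\partial t}+D\Big(\dot q\frac{\partial F}{\partial\dot q}+\dot p\frac{\partial F}{\partial\dot p}\Big)+S_+\Big(\frac{\partial F}{\partial t^-}+D\Big(\dot q^-\frac{\partial F}{\partial\dot q^-}+\dot p^-\frac{\partial F}{\partial\dot p^-}\Big)\Big)-D(F)$; in the left-hand side, the coefficients $\xi,\eta,\nu$ multiply the results of the operators applied to $\Omega$. $\Omega=X(\tilde H)+\tilde HD(\xi)=\nu^{-}(\alpha_{1}\dot{q}+\alpha_{2}\dot{q}^{-})+p^{-}(\alpha_{1}D(\eta)+\alpha_{2}D(\eta^{-}))+\nu(\alpha_{3}\dot{q}+\alpha_{4}\dot{q}^{-})+p(\alpha_{3}D(\eta)+\alpha_{4}D(\eta^{-}))+(\alpha_{2}p^{-}+\alpha_{4}p)\dot{q}^{-}D(\xi-\xi^{-})-\xi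 H_t-\eta H_q-\nu H_p-\xi^{-}H_{t^-}-\eta^{-}H_{q^-}-\nu^{-}H_{p^-}-HD(\xi)$. $X$ is prolonged to all variables at $t^-,t,t^+$ and their derivatives by the standard prolongation formulas ($\partial_{\dot q}$-coefficient $D(\eta)-\dot qD(\xi)$, $\partial_{\dot p}$-coefficient $D(\nu)-\dot pD(\xi)$, higher ones analogously), shifted variables carrying shifted coefficients. Variables are considered with $t^+-t=t-t^-=\tau$. *)

(* Defs.v *)
From Stdlib Require Import Reals ZArith List.
From Coquelicot Require Import Coquelicot.
Open Scope R_scope.

(** A function of n variables is encoded as a function of [x : nat -> R]
    reading only x 0, ..., x (n-1). *)
Definition upd (x : nat -> R) (i : nat) (s : R) : nat -> R :=
  fun j => if Nat.eqb j i then s else x j.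
Definition npd (i : nat) (F : (nat -> R) -> R) : (nat -> R) -> R :=
  fun x => Derive (fun s => F (upd x i s)) (x i).
Fixpoint ipd (l : list nat) (F : (nat -> R) -> R) : (nat -> R) -> R :=
  match l with nil => F | i :: l' => npd i (ipd l' F) end.
Definition ncont (F : (nat -> R) -> R) (x : nat -> R) : Prop :=
  forall eps, 0 < eps -> exists delta, 0 < delta /\
    forall y, (forall j, Rabs (y j - x j) < delta) -> Rabs (F y - F x) < eps.
Definition Cinf (F : (nat -> R) -> R) : Prop :=
  forall l : list nat,
    (forall x, ncont (ipd l F) x) /\
    (forall i x, ex_derive (fun s => ipd l F (upd x i s)) (x i)).

(** * Jet space of the delay problem.
    Coordinates: time variables t_k (t_0 = t, t_{-1} = t^-, t_1 = t^+),
    and derivatives q_k^(j), p_k^(j) of order j at the shifted time t_k. *)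
Inductive coord : Type :=
| CT : Z -> coord
| CQ : Z -> nat -> coord
| CP : Z -> nat -> coord.

Definition coord_eq_dec (c c' : coord) : {c = c'} + {c <> c'}.
Proof. decide equality; first [apply Nat.eq_dec | apply Z.eq_dec]. Defined.

Definition jet := coord -> R.
Definition dfun := jet -> R.

Definition dd (F : dfun) (v : jet) (z : jet) : R :=
  Derive (fun s => F (fun c => z c + s * v c)) 0.

Definition ecoord (c : coord) : jet := fun c' => if coord_eq_dec c c' then 1 else 0.
Definition pd (c : coord) (F : dfun) : dfun := fun z => dd F (ecoord c) z.

Definition vD (z : jet) : jet := fun c =>
  match c with
  | CT _ => 1
  | CQ k j => z (CQ k (S j))
  | CP k j => z (CP k (S j))
  end.
Definition Dt (F : dfun) : dfun := fun z => dd F (vD z) z.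

Definition shiftc (k : Z) (c : coord) : coord :=
  match c with
  | CT m => CT (m + k)
  | CQ m j => CQ (m + k) j
  | CP m j => CP (m + k) j
  end.
Definition shiftk (k : Z) (F : dfun) : dfun := fun z => F (fun c => z (shiftc k c)).
Definition Sp := shiftk 1.
Definition Sm := shiftk (-1).

Definition crd (c : coord) : dfun := fun z => z c.

Definition xiJ (xi : R -> R) : dfun := fun z => xi (z (CT 0)).
Definition etaJ (eta : R -> R -> R -> R) : dfun :=
  fun z => eta (z (CT 0)) (z (CQ 0 0)) (z (CP 0 0)).

Fixpoint prolQ (xi : R -> R) (eta : R -> R -> R -> R) (j : nat) : dfun :=
  match j with
  | O => etaJ eta
  | S j' => fun z => Dt (prolQ xi eta j') z - z (CQ 0 j) * Dt (xiJ xi) z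
  end.
Fixpoint prolP (xi : R -> R) (nu : R -> R -> R -> R) (j : nat) : dfun :=
  match j with
  | O => etaJ nu
  | S j' => fun z => Dt (prolP xi nu j') z - z (CP 0 j) * Dt (xiJ xi) z
  end.

Definition wX (xi : R -> R) (eta nu : R -> R -> R -> R) (z : jet) : jet :=
  fun c =>
  match c with
  | CT k => shiftk k (xiJ xi) z
  | CQ k j => shiftk k (prolQ xi eta j) z
  | CP k j => shiftk k (prolP xi nu j) z
  end.
Definition Xop (xi : R -> R) (eta nu : R -> R -> R -> R) (F : dfun) : dfun :=
  fun z => dd F (wX xi eta nu z) z.

Definition HJ (H : R -> R -> R -> R -> R -> R -> R) : dfun :=
  fun z => H (z (CT 0)) (z (CT (-1))) (z (CQ 0 0)) (z (CQ (-1) 0))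
             (z (CP 0 0)) (z (CP (-1) 0)).

Definition Htilde (a1 a2 a3 a4 : R) (H : R -> R -> R -> R -> R -> R -> R) : dfun :=
  fun z => z (CP (-1) 0) * (a1 * z (CQ 0 1) + a2 * z (CQ (-1) 1))
         + z (CP 0 0) * (a3 * z (CQ 0 1) + a4 * z (CQ (-1) 1))
         - HJ H z.

Definition Omega (a1 a2 a3 a4 : R) (H : R -> R -> R -> R -> R -> R -> R)
  (xi : R -> R) (eta nu : R -> R -> R -> R) : dfun :=
  fun z => Xop xi eta nu (Htilde a1 a2 a3 a4 H) z
           + Htilde a1 a2 a3 a4 H z * Dt (xiJ xi) z.

Definition vdp (F : dfun) : dfun :=
  fun z => pd (CP 0 0) F z - Dt (pd (CP 0 1) F) z
           + Sp (fun w => pd (CP (-1) 0) F w - Dt (pd (CP (-1) 1) F) w) z.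
Definition vdq (F : dfun) : dfun :=
  fun z => pd (CQ 0 0) F z - Dt (pd (CQ 0 1) F) z
           + Sp (fun w => pd (CQ (-1) 0) F w - Dt (pd (CQ (-1) 1) F) w) z.
Definition vdt (F : dfun) : dfun :=
  fun z => pd (CT 0) F z
           + Dt (fun w => w (CQ 0 1) * pd (CQ 0 1) F w + w (CP 0 1) * pd (CP 0 1) F w) z
           + Sp (fun w => pd (CT (-1)) F w
                  + Dt (fun u => u (CQ (-1) 1) * pd (CQ (-1) 1) F u
                              + u (CP (-1) 1) * pd (CP (-1) 1) F u) w) z
           - Dt F z.

Definition Ecomb (xi : R -> R) (eta nu : R -> R -> R -> R) (F : dfun) : dfun :=
  fun z => xiJ xi z * vdt F z + etaJ eta z * vdq F z + etaJ nu z * vdp F z.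

(* Main.v *)
Require Import Defs.
From Stdlib Require Import Reals ZArith List.
From Coquelicot Require Import Coquelicot.
From Stdlib Require Import Lia Lra Permutation FunctionalExtensionality.
Open Scope R_scope.

Lemma upd_eq x i s : upd x i s i = s.
Proof. unfold upd; now rewrite Nat.eqb_refl. Qed.
Lemma upd_neq x i j s : j <> i -> upd x i s j = x j.
Proof. intro H; unfold upd; apply Nat.eqb_neq in H; now rewrite H. Qed.
Lemma upd_upd_same x i a b : upd (upd x i a) i b = upd x i b.
Proof. apply functional_extensionality; intro j; unfold upd; now destruct (Nat.eqb j i). Qed.
Lemma upd_comm x i j a b : i <> j -> upd (upd x i a) j b = upd (upd x j b) i a.
Proof. intro H; apply functional_extensionality; intro k; unfold upd.
  destruct (Nat.eqb_spec k j), (Nat.eqb_spec k i); subst; auto; lia. Qed.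
Lemma upd_id x i : upd x i (x i) = x.
Proof. apply functional_extensionality; intro j; unfold upd; destruct (Nat.eqb_spec j i); subst; auto. Qed.

Lemma isd_const (c x : R) : is_derive (fun _ : R => c) x 0.
Proof. apply is_derive_Reals, derivable_pt_lim_const. Qed.

Lemma isd_plus (f g : R -> R) x df dg : is_derive f x df -> is_derive g x dg ->
  is_derive (fun t => f t + g t) x (df + dg).
Proof. rewrite !is_derive_Reals; intros; now apply (derivable_pt_lim_plus f g x df dg). Qed.
Lemma isd_mult (f g : R -> R) x df dg : is_derive f x df -> is_derive g x dg ->
  is_derive (fun t => f t * g t) x (df * g x + f x * dg).
Proof. rewrite !is_derive_Reals; intros; now apply (derivable_pt_lim_mult f g x df dg). Qed.
Lemma isd_opp (f : R -> R) x df : is_derive f x df ->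
  is_derive (fun t => - f t) x (- df).
Proof. rewrite !is_derive_Reals; intros; now apply (derivable_pt_lim_opp f x df). Qed.

Fixpoint sm (n : nat) (f : nat -> R) : R :=
  match n with O => 0 | S n => sm n f + f n end.
Lemma sm_ext n f g : (forall i, (i < n)%nat -> f i = g i) -> sm n f = sm n g.
Proof. induction n; intro H; simpl; auto. rewrite IHn by (intros; apply H; lia). rewrite H by lia; auto. Qed.

Definition depn (n : nat) (F : (nat -> R) -> R) :=
  forall x y, (forall j, (j < n)%nat -> x j = y j) -> F x = F y.

Lemma depn_npd n F i : depn n F -> depn n (npd i F).
Proof.
  intros D x y Hxy. unfold npd. destruct (lt_dec i n).
  - rewrite (Hxy i l). apply Derive_ext. intro s. apply D. intros j Hj. unfold upd.
    destruct (Nat.eqb j i); auto.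
  - rewrite (Derive_ext _ (fun _ => F x)). 2:{ intro s. apply D. intros j Hj.
      rewrite upd_neq by lia. auto. }
    rewrite (Derive_ext (fun s => F (upd y i s)) (fun _ => F y)). 2:{ intro s. apply D. intros j Hj.
      rewrite upd_neq by lia. auto. }
    now rewrite !Derive_const.
Qed.

Lemma depn_ipd n F l : depn n F -> depn n (ipd l F).
Proof. intro D; induction l; simpl; auto. apply depn_npd; auto. Qed.

Lemma fin_bound n (b : nat -> R) : (forall j, (n <= j)%nat -> b j = 0) ->
  exists M, forall j, Rabs (b j) <= M.
Proof.
  revert b; induction n; intros b Hb.
  - exists 0. intro j. rewrite Hb by lia. rewrite Rabs_R0; lra.
  - destruct (IHn (fun j => if Nat.eqb j n then 0 else b j)) as [M HM].
    { intros j Hj. destruct (Nat.eqb_spec j n); auto. apply Hb; lia. }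
    assert (0 <= M) by (specialize (HM n); rewrite Nat.eqb_refl, Rabs_R0 in HM; lra).
    exists (M + Rabs (b n)). intro j. specialize (HM j).
    destruct (Nat.eqb_spec j n). subst; pose proof (Rabs_pos (b n)); lra.
    pose proof (Rabs_pos (b n)); lra.
Qed.

Lemma chain (G : (nat -> R) -> R)
  (Hex : forall i x, ex_derive (fun s => G (upd x i s)) (x i))
  (Hc : forall i x, ncont (npd i G) x) :
  forall n a b M, (forall j, (n <= j)%nat -> b j = 0) -> (forall j, Rabs (b j) <= M) ->
  is_derive (fun s => G (fun i => a i + s * b i)) 0 (sm n (fun i => npd i G a * b i)).
Proof.
  induction n; intros a b M Hb HM; simpl.
  - apply is_derive_ext with (fun _ => G a).
    { intro s. f_equal. apply functional_extensionality. intro j. rewrite Hb by lia. ring. }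
    apply isd_const.
  - set (b' := fun j => if Nat.eqb j n then 0 else b j).
    assert (Hb' : forall j, (n <= j)%nat -> b' j = 0).
    { intros j Hj. unfold b'. destruct (Nat.eqb_spec j n); auto. apply Hb; lia. }
    assert (M0 : 0 <= M) by (pose proof (HM 0%nat); pose proof (Rabs_pos (b 0%nat)); lra).
    assert (HM' : forall j, Rabs (b' j) <= M).
    { intro j; unfold b'; destruct (Nat.eqb j n); auto. rewrite Rabs_R0; lra. }
    specialize (IHn a b' M Hb' HM').
    rewrite (sm_ext n _ (fun i => npd i G a * b i)) in IHn.
    2:{ intros i Hi. unfold b'. destruct (Nat.eqb_spec i n); auto; lia. }
    apply is_derive_ext with (fun s => (G (fun i => a i + s * b' i)) +
          (G (fun i => a i + s * b i) - G (fun i => a i + s * b' i))).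
    { intro; simpl; ring. }
    apply isd_plus; [exact IHn|].
    apply is_derive_Reals. intros eps Heps.
    set (e' := eps / (Rabs (b n) + 1)).
    assert (He' : 0 < e') by (unfold e'; apply Rdiv_lt_0_compat; [lra| pose proof (Rabs_pos (b n)); lra]).
    destruct (Hc n a e' He') as [d0 [Hd0 Hcont]].
    assert (Hd : 0 < d0 / (M + 1)) by (apply Rdiv_lt_0_compat; lra).
    exists (mkposreal _ Hd). intros h Hh Hhd. simpl in Hhd.
    assert (Hz : forall c : nat -> R, (fun i => a i + 0 * c i) = a).
    { intro c; apply functional_extensionality; intro; ring. }
    rewrite !Hz. replace (G a - G a) with 0 by ring.
    rewrite Rplus_0_l.
    set (y := fun i => a i + h * b' i).
    assert (E1 : (fun i => a i + h * b i) = upd y n (a n + h * b n)).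
    { apply functional_extensionality; intro j. unfold upd, y, b'. cbv beta.
      destruct (Nat.eqb_spec j n) as [->|Hn]; reflexivity. }
    assert (E2 : y = upd y n (a n)).
    { apply functional_extensionality; intro j. unfold upd, y, b'. cbv beta.
      destruct (Nat.eqb_spec j n) as [->|Hn]; [ring|reflexivity]. }
    rewrite E1. replace (G y) with (G (upd y n (a n))) by (now rewrite <- E2).
    assert (Hder : forall u, is_derive (fun s => G (upd y n s)) u (npd n G (upd y n u))).
    { intro u. unfold npd. rewrite upd_eq.
      rewrite (Derive_ext _ (fun s => G (upd y n s))) by (intro; now rewrite upd_upd_same).
      apply Derive_correct. pose proof (Hex n (upd y n u)) as HH.
      rewrite upd_eq in HH. eapply ex_derive_ext; [|exact HH].
      intro; simpl; now rewrite upd_upd_same. }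
    destruct (MVT_gen (fun s => G (upd y n s)) (a n) (a n + h * b n)
               (fun u => npd n G (upd y n u))) as [c [Hc1 Hc2]].
    { intros; apply Hder. }
    { intros u _. apply continuity_pt_filterlim. apply (@ex_derive_continuous R_AbsRing R_NormedModule).
      eexists; apply Hder. }
    simpl in Hc2. rewrite Hc2.
    replace ((npd n G (upd y n c) * (a n + h * b n - a n) - 0) / h - npd n G a * b n)
      with ((npd n G (upd y n c) - npd n G a) * b n) by (field; auto).
    assert (Hh1 : Rabs h * M < d0).
    { apply Rle_lt_trans with (Rabs h * (M + 1)).
      - apply Rmult_le_compat_l; [apply Rabs_pos | lra].
      - apply Rmult_lt_reg_r with (/ (M + 1)). apply Rinv_0_lt_compat; lra.
        rewrite Rmult_assoc, Rinv_r, Rmult_1_r by lra. exact Hhd. }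
    assert (Hcl : Rabs (npd n G (upd y n c) - npd n G a) < e').
    { apply Hcont. intro j. destruct (Nat.eq_dec j n).
      - subst j. rewrite upd_eq.
        assert (Rabs (c - a n) <= Rabs (h * b n)).
        { revert Hc1. unfold Rmin, Rmax. destruct (Rle_dec (a n) (a n + h * b n)); intro Hc1;
          unfold Rabs; destruct (Rcase_abs (c - a n)), (Rcase_abs (h * b n)); lra. }
        rewrite Rabs_mult in H. pose proof (HM n).
        pose proof (Rmult_le_compat_l (Rabs h) _ _ (Rabs_pos h) H0). lra.
      - rewrite upd_neq by auto. unfold y.
        replace (a j + h * b' j - a j) with (h * b' j) by ring.
        rewrite Rabs_mult. pose proof (HM' j).
        pose proof (Rmult_le_compat_l (Rabs h) _ _ (Rabs_pos h) H). lra. }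
    rewrite Rabs_mult.
    apply Rle_lt_trans with (e' * Rabs (b n)).
    { apply Rmult_le_compat_r; [apply Rabs_pos| lra]. }
    unfold e'. pose proof (Rabs_pos (b n)).
    apply Rmult_lt_reg_r with (Rabs (b n) + 1). lra.
    field_simplify; try lra. 
Qed.

Ltac updsolve := apply functional_extensionality; let k := fresh "k" in intro k; unfold upd;
  repeat match goal with |- context [Nat.eqb ?a ?b] => destruct (Nat.eqb_spec a b) end;
  subst; try lia; reflexivity.

Lemma Cinf_ex F l i x : Cinf F -> ex_derive (fun s => ipd l F (upd x i s)) (x i).
Proof. intro H; apply (proj2 (H l)). Qed.
Lemma Cinf_cont F l x : Cinf F -> ncont (ipd l F) x.
Proof. intro H; apply (proj1 (H l)). Qed.

Lemma ncont_2d G x i j : i <> j -> ncont G x ->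
  continuity_2d_pt (fun u v => G (upd (upd x i u) j v)) (x i) (x j).
Proof.
  intros Hij Hc eps. destruct (Hc eps (cond_pos eps)) as [d [Hd H]].
  exists (mkposreal d Hd). intros u v Hu Hv. simpl in *.
  rewrite (upd_id x i), (upd_id x j). apply H. intro k.
  unfold upd. destruct (Nat.eqb_spec k j); subst; auto.
  destruct (Nat.eqb_spec k i); subst; auto.
  replace (x k - x k) with 0 by ring. rewrite Rabs_R0; auto.
Qed.

Lemma swap F l i j x : Cinf F ->
  npd i (npd j (ipd l F)) x = npd j (npd i (ipd l F)) x.
Proof.
  intro HF. destruct (Nat.eq_dec i j) as [->|Hij]; [reflexivity|].
  set (K := ipd l F).
  set (f := fun u v => K (upd (upd x i u) j v)).
  transitivity (Derive (fun u => Derive (fun t => f u t) (x j)) (x i)).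
  { unfold npd. apply Derive_ext. intro u. rewrite upd_neq by auto. reflexivity. }
  transitivity (Derive (fun z => Derive (fun t => f t z) (x i)) (x j)).
  2:{ unfold npd. apply Derive_ext. intro v. rewrite upd_neq by auto.
      apply Derive_ext. intro u. unfold f. rewrite upd_comm by auto. reflexivity. }
  assert (D1 : forall u v, Derive (fun t => f u t) v = npd j K (upd (upd x i u) j v)).
  { intros u v. unfold npd. rewrite upd_eq. apply Derive_ext. intro t.
    unfold f. now rewrite upd_upd_same. }
  assert (D2 : forall u v, Derive (fun t => f t v) u = npd i K (upd (upd x i u) j v)).
  { intros u v. unfold npd. rewrite upd_neq, upd_eq by auto. apply Derive_ext. intro t.
    unfold f. f_equal. updsolve. }
  apply Schwarz.
  - exists (mkposreal 1 Rlt_0_1). intros u v _ _. repeat split.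
    + pose proof (Cinf_ex F l i (upd (upd x j v) i u) HF) as H.
      rewrite upd_eq in H. eapply ex_derive_ext; [|exact H].
      intro t; simpl. unfold f, K. f_equal; updsolve.
    + pose proof (Cinf_ex F l j (upd (upd x i u) j v) HF) as H.
      rewrite upd_eq in H. eapply ex_derive_ext; [|exact H].
      intro t; simpl. unfold f, K. f_equal; updsolve.
    + pose proof (Cinf_ex F (j :: l) i (upd (upd x j v) i u) HF) as H.
      rewrite upd_eq in H. eapply ex_derive_ext; [|exact H].
      intro t; simpl. rewrite D1. unfold K. f_equal; updsolve.
    + pose proof (Cinf_ex F (i :: l) j (upd (upd x i u) j v) HF) as H.
      rewrite upd_eq in H. eapply ex_derive_ext; [|exact H].
      intro t; simpl. rewrite D2. unfold K. now rewrite upd_upd_same.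
  - eapply continuity_2d_pt_ext.
    2: apply (ncont_2d (ipd (i :: j :: l) F) x i j Hij (Cinf_cont F _ x HF)).
    intros u v. cbv beta. change (ipd (i :: j :: l) F) with (npd i (npd j K)).
    unfold npd at 1. rewrite upd_neq, upd_eq by auto.
    apply Derive_ext. intro t. rewrite D1. f_equal; updsolve.
  - eapply continuity_2d_pt_ext.
    2: apply (ncont_2d (ipd (j :: i :: l) F) x i j Hij (Cinf_cont F _ x HF)).
    intros u v. cbv beta. change (ipd (j :: i :: l) F) with (npd j (npd i K)).
    unfold npd at 1. rewrite upd_eq.
    apply Derive_ext. intro t. rewrite D2. f_equal; updsolve.
Qed.

Fixpoint ins (i : nat) (l : list nat) : list nat :=
  match l with
  | nil => i :: nil
  | j :: l' => if Nat.leb i j then i :: j :: l' else j :: ins i l'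
  end.

Lemma ins_perm i l : Permutation (i :: l) (ins i l).
Proof.
  induction l; simpl; auto. destruct (Nat.leb i a); auto.
  eapply perm_trans; [apply perm_swap|]. apply perm_skip; auto.
Qed.

Lemma ipd_perm F : Cinf F -> forall l l', Permutation l l' -> ipd l F = ipd l' F.
Proof.
  intros HF l l' P. induction P; simpl; auto.
  - now rewrite IHP.
  - apply functional_extensionality; intro z. apply swap; auto.
  - congruence.
Qed.

Lemma npd_ins F i l : Cinf F -> npd i (ipd l F) = ipd (ins i l) F.
Proof. intro HF. apply (ipd_perm F HF (i :: l)). apply ins_perm. Qed.

Lemma per_ipd (f : R -> R) (tau : R) (Hf : Cinf (fun x => f (x 0%nat)))
  (Hper : forall t, f (t + tau) = f t) :
  forall L x y, x 0%nat = y 0%nat + tau -> ipd L (fun x => f (x 0%nat)) x = ipd L (fun x => f (x 0%nat)) y.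
Proof.
  assert (Dep : depn 1 (fun x => f (x 0%nat))).
  { intros x y H. rewrite H by lia. auto. }
  induction L as [|i L IH]; intros x y Hxy; simpl.
  - rewrite Hxy; auto.
  - set (K := ipd L (fun x => f (x 0%nat))).
    assert (DK : depn 1 K) by (apply depn_ipd; auto).
    unfold npd. destruct (Nat.eq_dec i 0) as [->|Hi].
    + rewrite (Derive_ext _ (fun s => K (upd y 0 ((fun s => s - tau) s)))).
      2:{ intro s. apply IH. rewrite !upd_eq. ring. }
      assert (Ex : ex_derive (fun s => K (upd y 0 s)) (x 0%nat - tau)).
      { rewrite Hxy. replace (y 0%nat + tau - tau) with (y 0%nat) by ring.
        apply (Cinf_ex _ L 0 y Hf). }
      pose proof (Derive_comp (fun s => K (upd y 0 s)) (fun s => s - tau) (x 0%nat) Ex) as E.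
      cbv beta in E. rewrite E.
      * rewrite Hxy. replace (y 0%nat + tau - tau) with (y 0%nat) by ring.
        replace (Derive (fun s => s - tau) (y 0%nat + tau)) with 1. ring.
        symmetry; apply is_derive_unique. auto_derive; auto; ring.
      * auto_derive; auto.
    + rewrite (Derive_ext _ (fun _ => K x)).
      2:{ intro s. apply DK. intros j Hj. rewrite upd_neq by lia. auto. }
      rewrite (Derive_ext (fun s => K (upd y i s)) (fun _ => K y)).
      2:{ intro s. apply DK. intros j Hj. rewrite upd_neq by lia. auto. }
      now rewrite !Derive_const.
Qed.

Inductive fn := fH | fE | fN | fF.
Inductive ex :=
| Zero | One | Cst (r : R) | Crd (c : coord)
| Add (a b : ex) | Mul (a b : ex) | Neg (a : ex) | At (g : fn) (L : list nat) (k : Z).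

Definition cs (g : fn) : list coord :=
  match g with
  | fH => CT 0 :: CT (-1) :: CQ 0 0 :: CQ (-1) 0 :: CP 0 0 :: CP (-1) 0 :: nil
  | fE | fN => CT 0 :: CQ 0 0 :: CP 0 0 :: nil
  | fF => CT 0 :: nil
  end.
Definition ar g := length (cs g).
Definition args (g : fn) (k : Z) (z : jet) : nat -> R :=
  fun i => z (shiftc k (nth i (cs g) (CT 0))).
Definition atv (env : fn -> (nat -> R) -> R) g L k z := ipd L (env g) (args g k z).

Fixpoint ev env (e : ex) (z : jet) : R :=
  match e with
  | Zero => 0 | One => 1 | Cst r => r | Crd c => z c
  | Add a b => ev env a z + ev env b z
  | Mul a b => ev env a z * ev env b z
  | Neg a => - ev env a z
  | At g L k => atv env g L k z
  end.

Definition sA a b := match a with Zero => b | _ => match b with Zero => a | _ => Add a b end end.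
Definition sM a b := match a with Zero => Zero | One => b
  | _ => match b with Zero => Zero | One => a | _ => Mul a b end end.
Definition sN a := match a with Zero => Zero | _ => Neg a end.

Lemma sA_ok env a b z : ev env (sA a b) z = ev env a z + ev env b z.
Proof. destruct a, b; simpl; ring. Qed.
Lemma sM_ok env a b z : ev env (sM a b) z = ev env a z * ev env b z.
Proof. destruct a, b; simpl; ring. Qed.
Lemma sN_ok env a z : ev env (sN a) z = - ev env a z.
Proof. destruct a; simpl; ring. Qed.

Fixpoint atd g L k (v : coord -> ex) (n : nat) : ex :=
  match n with
  | O => Zero
  | S n => sA (atd g L k v n) (sM (At g (ins n L) k) (v (shiftc k (nth n (cs g) (CT 0)))))
  end.

Fixpoint der (e : ex) (v : coord -> ex) : ex :=
  match e with
  | Zero | One | Cst _ => Zero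
  | Crd c => v c
  | Add a b => sA (der a v) (der b v)
  | Mul a b => sA (sM (der a v) b) (sM a (der b v))
  | Neg a => sN (der a v)
  | At g L k => atd g L k v (ar g)
  end.

Fixpoint shE (k : Z) (e : ex) : ex :=
  match e with
  | Crd c => Crd (shiftc k c)
  | Add a b => Add (shE k a) (shE k b)
  | Mul a b => Mul (shE k a) (shE k b)
  | Neg a => Neg (shE k a)
  | At g L m => At g L (m + k)
  | _ => e
  end.

Definition envOK (env : fn -> (nat -> R) -> R) :=
  forall g, Cinf (env g) /\ depn (ar g) (env g).

Lemma shiftc_shiftc k m c : shiftc k (shiftc m c) = shiftc (m + k) c.
Proof. destruct c; simpl; now rewrite Z.add_assoc. Qed.

Lemma shE_ok env k e z : ev env (shE k e) z = ev env e (fun c => z (shiftc k c)).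
Proof.
  induction e; simpl; try rewrite IHe1, IHe2; try rewrite IHe; auto.
  unfold atv, args. f_equal. apply functional_extensionality; intro i.
  now rewrite shiftc_shiftc.
Qed.

Lemma isd_lin (a w x : R) : is_derive (fun s => a + s * w) x w.
Proof. auto_derive; auto; ring. Qed.

Lemma der_ok env (HE : envOK env) e v z :
  is_derive (fun s => ev env e (fun c => z c + s * ev env (v c) z)) 0 (ev env (der e v) z).
Proof.
  assert (Z0 : (fun c => z c + 0 * ev env (v c) z) = z).
  { apply functional_extensionality; intro; ring. }
  induction e; simpl.
  - apply isd_const.
  - apply isd_const.
  - apply isd_const.
  - apply isd_lin.
  - rewrite sA_ok. now apply isd_plus.
  - rewrite sA_ok, !sM_ok. pose proof (isd_mult _ _ 0 _ _ IHe1 IHe2) as H.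
    cbv beta in H. rewrite Z0 in H. exact H.
  - rewrite sN_ok. now apply isd_opp.
  -
    destruct (HE g) as [HC HD].
    set (G := ipd L (env g)).
    set (a := args g k z).
    set (bf := args g k (fun c => ev env (v c) z)).
    set (b := fun i => if Nat.ltb i (ar g) then bf i else 0).
    assert (Hb : forall j, (ar g <= j)%nat -> b j = 0).
    { intros j Hj. unfold b. destruct (Nat.ltb_spec j (ar g)); auto; lia. }
    destruct (fin_bound _ b Hb) as [M HM].
    apply is_derive_ext with (fun s => G (fun i => a i + s * b i)).
    { intro s. unfold atv. apply (depn_ipd _ _ L HD). intros j Hj. unfold b, a, args.
      destruct (Nat.ltb_spec j (ar g)); try lia. reflexivity. }
    replace (ev env (atd g L k v (ar g)) z) with (sm (ar g) (fun i => npd i G a * b i)).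
    + apply chain with M; auto.
      * intros; apply Cinf_ex; auto.
      * intros i x. apply (Cinf_cont _ (i :: L)); auto.
    + assert (forall m, (m <= ar g)%nat -> ev env (atd g L k v m) z = sm m (fun i => npd i G a * b i)).
      { induction m; intro Hm; cbn [atd sm]; auto. rewrite sA_ok, sM_ok, IHm by lia. f_equal.
        simpl ev. unfold atv, G. rewrite npd_ins by auto. unfold b.
        destruct (Nat.ltb_spec m (ar g)); try lia. reflexivity. }
      symmetry; auto.
Qed.

Definition vDE (c : coord) : ex :=
  match c with CT _ => One | CQ k j => Crd (CQ k (S j)) | CP k j => Crd (CP k (S j)) end.
Definition ceqb (c d : coord) : bool :=
  match c, d with
  | CT a, CT b => Z.eqb a b
  | CQ a i, CQ b j => Z.eqb a b && Nat.eqb i j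
  | CP a i, CP b j => Z.eqb a b && Nat.eqb i j
  | _, _ => false
  end.
Lemma ceqb_true c d : ceqb c d = true <-> c = d.
Proof.
  destruct c, d; simpl; split; intro H; try discriminate;
  repeat match goal with
  | H : (_ && _)%bool = true |- _ => apply andb_prop in H; destruct H
  | H : Z.eqb _ _ = true |- _ => apply Z.eqb_eq in H
  | H : Nat.eqb _ _ = true |- _ => apply Nat.eqb_eq in H
  | H : _ = _ |- _ => injection H; clear H; intros
  end; subst; auto;
  try rewrite Z.eqb_refl; try rewrite Nat.eqb_refl; auto.
Qed.
Definition ecE (c : coord) : coord -> ex := fun d => if ceqb c d then One else Zero.

Lemma dd_ev env (HE : envOK env) e v z :
  dd (ev env e) (fun c => ev env (v c) z) z = ev env (der e v) z.
Proof. unfold dd. apply is_derive_unique. apply der_ok; auto. Qed.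

Lemma Dt_ev env (HE : envOK env) e : Dt (ev env e) = ev env (der e vDE).
Proof.
  apply functional_extensionality; intro z. unfold Dt.
  rewrite <- dd_ev by auto. f_equal. apply functional_extensionality; intro c.
  destruct c; reflexivity.
Qed.

Lemma pd_ev env (HE : envOK env) c e : pd c (ev env e) = ev env (der e (ecE c)).
Proof.
  apply functional_extensionality; intro z. unfold pd.
  rewrite <- dd_ev by auto. f_equal. apply functional_extensionality; intro d.
  unfold ecoord, ecE. destruct (coord_eq_dec c d) as [E|E].
  - apply ceqb_true in E. rewrite E. reflexivity.
  - destruct (ceqb c d) eqn:E2; [apply ceqb_true in E2; contradiction|reflexivity].
Qed.

Lemma shiftk_ev env k e : shiftk k (ev env e) = ev env (shE k e).
Proof. apply functional_extensionality; intro z. unfold shiftk. now rewrite shE_ok. Qed.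

Definition vdqE e :=
  Add (Add (der e (ecE (CQ 0 0))) (Neg (der (der e (ecE (CQ 0 1))) vDE)))
      (shE 1 (Add (der e (ecE (CQ (-1) 0))) (Neg (der (der e (ecE (CQ (-1) 1))) vDE)))).
Definition vdpE e :=
  Add (Add (der e (ecE (CP 0 0))) (Neg (der (der e (ecE (CP 0 1))) vDE)))
      (shE 1 (Add (der e (ecE (CP (-1) 0))) (Neg (der (der e (ecE (CP (-1) 1))) vDE)))).
Definition vdtE e :=
  Add (Add (Add (der e (ecE (CT 0)))
        (der (Add (Mul (Crd (CQ 0 1)) (der e (ecE (CQ 0 1)))) (Mul (Crd (CP 0 1)) (der e (ecE (CP 0 1))))) vDE))
        (shE 1 (Add (der e (ecE (CT (-1))))
           (der (Add (Mul (Crd (CQ (-1) 1)) (der e (ecE (CQ (-1) 1)))) (Mul (Crd (CP (-1) 1)) (der e (ecE (CP (-1) 1))))) vDE))))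
      (Neg (der e vDE)).

Lemma vdq_ev env (HE : envOK env) e : vdq (ev env e) = ev env (vdqE e).
Proof.
  apply functional_extensionality; intro z. unfold vdq.
  rewrite !pd_ev by auto. rewrite !Dt_ev by auto.
  unfold Sp, shiftk.
  unfold vdqE. cbn [ev]. rewrite !shE_ok. cbn [ev]. unfold Rminus. reflexivity.
Qed.
Lemma vdp_ev env (HE : envOK env) e : vdp (ev env e) = ev env (vdpE e).
Proof.
  apply functional_extensionality; intro z. unfold vdp.
  rewrite !pd_ev by auto. rewrite !Dt_ev by auto.
  unfold Sp, shiftk.
  unfold vdpE. cbn [ev]. rewrite !shE_ok. cbn [ev]. unfold Rminus. reflexivity.
Qed.
Lemma vdt_ev env (HE : envOK env) e : vdt (ev env e) = ev env (vdtE e).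
Proof.
  apply functional_extensionality; intro z. unfold vdt.
  rewrite !pd_ev by auto.
  change (fun w => w (CQ 0 1) * ev env (der e (ecE (CQ 0 1))) w + w (CP 0 1) * ev env (der e (ecE (CP 0 1))) w)
    with (ev env (Add (Mul (Crd (CQ 0 1)) (der e (ecE (CQ 0 1)))) (Mul (Crd (CP 0 1)) (der e (ecE (CP 0 1)))))).
  change (fun w => w (CQ (-1) 1) * ev env (der e (ecE (CQ (-1) 1))) w + w (CP (-1) 1) * ev env (der e (ecE (CP (-1) 1))) w)
    with (ev env (Add (Mul (Crd (CQ (-1) 1)) (der e (ecE (CQ (-1) 1)))) (Mul (Crd (CP (-1) 1)) (der e (ecE (CP (-1) 1)))))).
  rewrite !Dt_ev by auto.
  unfold Sp, shiftk.
  unfold vdtE. cbn [ev]. rewrite !shE_ok. cbn [ev]. unfold Rminus. reflexivity.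
Qed.

Definition envT (H : R -> R -> R -> R -> R -> R -> R) (eta nu : R -> R -> R -> R) (f : R -> R)
  : fn -> (nat -> R) -> R :=
  fun g => match g with
  | fH => fun x => H (x 0%nat) (x 1%nat) (x 2%nat) (x 3%nat) (x 4%nat) (x 5%nat)
  | fE => fun x => eta (x 0%nat) (x 1%nat) (x 2%nat)
  | fN => fun x => nu (x 0%nat) (x 1%nat) (x 2%nat)
  | fF => fun x => f (x 0%nat)
  end.

Lemma envT_ok H eta nu f
  (HH : Cinf (fun x => H (x 0%nat) (x 1%nat) (x 2%nat) (x 3%nat) (x 4%nat) (x 5%nat)))
  (Hf : Cinf (fun x => f (x 0%nat)))
  (Heta : Cinf (fun x => eta (x 0%nat) (x 1%nat) (x 2%nat)))
  (Hnu : Cinf (fun x => nu (x 0%nat) (x 1%nat) (x 2%nat))) :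
  envOK (envT H eta nu f).
Proof.
  intro g; destruct g; split; auto; intros x y Hxy; unfold ar in Hxy; simpl in Hxy; simpl;
  repeat rewrite Hxy by lia; reflexivity.
Qed.

Definition xiE (alpha : R) := Add (Mul (Cst alpha) (Crd (CT 0))) (At fF nil 0).
Definition etaE := At fE nil 0.
Definition nuE := At fN nil 0.
Fixpoint prolE (cc : nat -> coord) (base xe : ex) (j : nat) : ex :=
  match j with
  | O => base
  | S j' => Add (der (prolE cc base xe j') vDE) (Neg (Mul (Crd (cc j)) (der xe vDE)))
  end.
Definition wXE (xe : ex) (c : coord) : ex :=
  match c with
  | CT k => shE k xe
  | CQ k j => shE k (prolE (CQ 0) etaE xe j)
  | CP k j => shE k (prolE (CP 0) nuE xe j)
  end.


Lemma prolQ_ev env (HE : envOK env) xi eta xe (Hx : xiJ xi = ev env xe)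
  (He : etaJ eta = ev env etaE) : forall j, prolQ xi eta j = ev env (prolE (CQ 0) etaE xe j).
Proof.
  induction j; simpl; auto. rewrite IHj, Hx, !Dt_ev by auto.
  apply functional_extensionality; intro z. cbn [ev]. unfold Rminus; reflexivity.
Qed.
Lemma prolP_ev env (HE : envOK env) xi nu xe (Hx : xiJ xi = ev env xe)
  (He : etaJ nu = ev env nuE) : forall j, prolP xi nu j = ev env (prolE (CP 0) nuE xe j).
Proof.
  induction j; simpl; auto. rewrite IHj, Hx, !Dt_ev by auto.
  apply functional_extensionality; intro z. cbn [ev]. unfold Rminus; reflexivity.
Qed.

Lemma Xop_ev env (HE : envOK env) xi eta nu xe (Hx : xiJ xi = ev env xe)
  (He : etaJ eta = ev env etaE) (Hn : etaJ nu = ev env nuE) e :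
  Xop xi eta nu (ev env e) = ev env (der e (wXE xe)).
Proof.
  apply functional_extensionality; intro z. unfold Xop.
  rewrite <- dd_ev by auto. f_equal. apply functional_extensionality; intro c.
  destruct c; unfold wX, wXE; rewrite <- shiftk_ev.
  - now rewrite Hx.
  - now rewrite (prolQ_ev env HE xi eta xe Hx He).
  - now rewrite (prolP_ev env HE xi nu xe Hx Hn).
Qed.

Definition HtE (a1 a2 a3 a4 : R) :=
  Add (Add (Mul (Crd (CP (-1) 0)) (Add (Mul (Cst a1) (Crd (CQ 0 1))) (Mul (Cst a2) (Crd (CQ (-1) 1)))))
           (Mul (Crd (CP 0 0)) (Add (Mul (Cst a3) (Crd (CQ 0 1))) (Mul (Cst a4) (Crd (CQ (-1) 1))))))
      (Neg (At fH nil 0)).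
Definition EcE xe e := Add (Add (Mul xe (vdtE e)) (Mul etaE (vdqE e))) (Mul nuE (vdpE e)).

Lemma Ecomb_ev env (HE : envOK env) xi eta nu xe (Hx : xiJ xi = ev env xe)
  (He : etaJ eta = ev env etaE) (Hn : etaJ nu = ev env nuE) e :
  Ecomb xi eta nu (ev env e) = ev env (EcE xe e).
Proof.
  apply functional_extensionality; intro z. unfold Ecomb.
  rewrite vdt_ev, vdq_ev, vdp_ev, Hx, He, Hn by auto. reflexivity.
Qed.

Theorem lemma4 (a1 a2 a3 a4 : R) (tau : R) (Htau : 0 < tau)
  (H : R -> R -> R -> R -> R -> R -> R)
  (HH : Cinf (fun x => H (x 0%nat) (x 1%nat) (x 2%nat) (x 3%nat) (x 4%nat) (x 5%nat)))
  (alpha : R) (f : R -> R)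
  (Hf : Cinf (fun x => f (x 0%nat)))
  (Hper : forall t, f (t + tau) = f t)
  (xi : R -> R) (Hxi : forall t, xi t = alpha * t + f t)
  (eta nu : R -> R -> R -> R)
  (Heta : Cinf (fun x => eta (x 0%nat) (x 1%nat) (x 2%nat)))
  (Hnu : Cinf (fun x => nu (x 0%nat) (x 1%nat) (x 2%nat)))
  (z : jet)
  (Hz1 : z (CT 1) = z (CT 0) + tau)
  (Hzm1 : z (CT (-1)) = z (CT 0) - tau) :
  Ecomb xi eta nu (Omega a1 a2 a3 a4 H xi eta nu) z
  = Xop xi eta nu (Ecomb xi eta nu (Htilde a1 a2 a3 a4 H)) z
    + Dt (xiJ xi) z * Ecomb xi eta nu (Htilde a1 a2 a3 a4 H) z.
Proof.
  pose proof (envT_ok H eta nu f HH Hf Heta Hnu) as HE.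
  set (env := envT H eta nu f) in *.
  assert (Hx : xiJ xi = ev env (xiE alpha)).
  { apply functional_extensionality; intro w. unfold xiJ. rewrite Hxi. reflexivity. }
  assert (He : etaJ eta = ev env etaE) by reflexivity.
  assert (Hn : etaJ nu = ev env nuE) by reflexivity.
  assert (Ht : Htilde a1 a2 a3 a4 H = ev env (HtE a1 a2 a3 a4)).
  { apply functional_extensionality; intro w. unfold Htilde. cbn [ev]. unfold Rminus. reflexivity. }
  assert (Om : Omega a1 a2 a3 a4 H xi eta nu =
     ev env (Add (der (HtE a1 a2 a3 a4) (wXE (xiE alpha))) (Mul (HtE a1 a2 a3 a4) (der (xiE alpha) vDE)))).
  { apply functional_extensionality; intro w. unfold Omega.
    rewrite Ht, (Xop_ev env HE xi eta nu _ Hx He Hn), Hx, Dt_ev by auto. reflexivity. }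
  rewrite Om, Ht, !(Ecomb_ev env HE xi eta nu _ Hx He Hn), (Xop_ev env HE xi eta nu _ Hx He Hn), Hx, Dt_ev by auto.
  match goal with |- ev env ?A z = ev env ?B z + ev env ?C z * ev env ?D z =>
    change (ev env A z = ev env (Add B (Mul C D)) z) end.
  match goal with |- ev env ?A z = ev env ?B z =>
    let A' := eval vm_compute in A in
    let B' := eval vm_compute in B in
    replace A with A' by (vm_compute; reflexivity);
    replace B with B' by (vm_compute; reflexivity) end.
  assert (P1 : forall L, atv env fF L 1 z = atv env fF L 0 z).
  { intro L. unfold atv. change (env fF) with (fun x : nat -> R => f (x 0%nat)).
    apply per_ipd with tau; auto. }
  assert (P2 : forall L, atv env fF L (-1) z = atv env fF L 0 z).
  { intro L. unfold atv. change (env fF) with (fun x : nat -> R => f (x 0%nat)).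
    symmetry. apply per_ipd with tau; auto. unfold args. simpl. rewrite Hzm1. ring. }
  cbn [ev].
  repeat rewrite P1. repeat rewrite P2. rewrite ?Hz1, ?Hzm1.
  repeat match goal with |- context [atv ?a ?b ?c ?d ?e] => generalize (atv a b c d e); intro end.
  ring.
Qed.
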